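(* For every $v\equiv 0 \pmod 6$ with $v\ge 18$, there exists a $2$-split decomposition of $K_v^{(3)}-I$ into tight $9$-cycles.
   Context: $K_v^{(3)}$ denotes the complete $3$-uniform hypergraph on $v$ vertices; for $3\mid v$, $K_v^{(3)}-I$ is obtained by deleting the edges of a $1$-factor $I$ (a set of $v/3$ pairwise disjoint triples covering all vertices). A (3-uniform tight) $k$-cycle is given by a cyclic sequence $v_1,\dots,v_k$ of $k$ distinct vertices, its edges being the triples $\{v_i,v_{i+1},v_{i+2}\}$ ($i=1,\dots,k$, indices mod $k$). A decomposition is a collection of cycles whose edge sets partition the edge set. For even $v$ with $3\mid v/2$, a $2$-split decomposition of $K_v^{(3)}-I$ into $k$-cycles is one where the vertex set is partitioned into two sets $V_1,V_2$ of size $v/2$, the $1$-factor is $I=I_1\cup I_2$ with $I_j$ a $1$-factor of $V_j$, and the collection of cycles consists of a $k$-cycle decomposition of $K^{(3)}[V_1]-I_1$, a $k$-cycle decomposition of $K^{(3)}[V_2]-I_2$, and a $k$-cycle decomposition of the hypergraph of all triples meeting both $V_1$ and $V_2$. *)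

(* Defs.v *)
From mathcomp Require Import all_boot.
Set Implicit Arguments. Unset Strict Implicit. Unset Printing Implicit Defensive.

Section Hyper.
Variable T : finType.

Definition complete3 (V : {set T}) : {set {set T}} :=
  [set e : {set T} | (e \subset V) && (#|e| == 3)].

Definition one_factor (V : {set T}) (I : {set {set T}}) : Prop :=
  partition I V /\ (forall t, t \in I -> #|t| = 3).

Definition cross3 (V1 V2 : {set T}) : {set {set T}} :=
  [set e : {set T} | [&& #|e| == 3, e :&: V1 != set0 & e :&: V2 != set0]].

Definition cyc_edges k (c : k.-tuple T) : {set {set T}} :=
  [set [set tnth c i; tnth c (ordS i); tnth c (ordS (ordS i))] | i : 'I_k].

Definition cycle_decomp k (H : {set {set T}}) (cs : seq (k.-tuple T)) : Prop :=
  (forall c, c \in cs -> uniq c /\ cyc_edges c \subset H) /\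
  (forall e, e \in H -> count (fun c => e \in cyc_edges c) cs = 1).

End Hyper.

Definition two_split_decomp (v k : nat) : Prop :=
  exists (V1 V2 : {set 'I_v}) (I1 I2 : {set {set 'I_v}})
         (cs1 cs2 cs12 : seq (k.-tuple 'I_v)),
    [/\ [/\ V1 :&: V2 = set0, V1 :|: V2 = setT, #|V1| = v %/ 2 & #|V2| = v %/ 2],
        one_factor V1 I1, one_factor V2 I2 &
        [/\ cycle_decomp (complete3 V1 :\: I1) cs1,
            cycle_decomp (complete3 V2 :\: I2) cs2 &
            cycle_decomp (cross3 V1 V2) cs12]].

(* Main.v *)
Require Import Defs.
From mathcomp Require Import all_boot zify.
Set Implicit Arguments. Unset Strict Implicit. Unset Printing Implicit Defensive.

Definition wnd (c : seq nat) (i : nat) : nat * nat * nat :=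
  (nth 0 c i, nth 0 c ((i+1) %% 9), nth 0 c ((i+2) %% 9)).
Definition mem3 (x : nat) (t : nat * nat * nat) : bool :=
  let '(a, b, c) := t in (x == a) || (x == b) || (x == c).
Definition eq3 (t u : nat * nat * nat) : bool :=
  let '(a, b, c) := t in let '(x, y, z) := u in
  [&& mem3 a u, mem3 b u, mem3 c u, mem3 x t, mem3 y t & mem3 z t].
Definition edge_in (c : seq nat) (u : nat * nat * nat) : bool :=
  has (fun i => eq3 (wnd c i) u) (iota 0 9).

Definition alK (a b c : nat) : bool := ~~ ((a == b) && (b == c)).
Definition alC (s a b c : nat) : bool := ((a < s) || (b < s) || (c < s)) && ((s <= a) || (s <= b) || (s <= c)).
Definition alT (a b c : nat) : bool := [&& a != b, b != c & a != c].

Definition chk (k : nat) (al : nat -> nat -> nat -> bool) (bc : seq (seq nat)) : bool :=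
  all (fun c => [&& size c == 9, uniq c, all (fun x => x < 3 * k) c &
         all (fun i => let '(a, b, d) := wnd c i in al (a %/ 3) (b %/ 3) (d %/ 3)) (iota 0 9)]) bc &&
  all (fun x => all (fun y => all (fun z =>
     (x != y) && (y != z) && (x != z) ==>
     (count (fun c => edge_in c (x, y, z)) bc == al (x %/ 3) (y %/ 3) (z %/ 3)))
     (iota 0 (3 * k))) (iota 0 (3 * k))) (iota 0 (3 * k)).
Definition bK3 : seq (seq nat) := [:: [:: 0; 2; 8; 4; 6; 7; 5; 1; 3];
  [:: 0; 5; 3; 6; 8; 2; 1; 4; 7];
  [:: 0; 1; 4; 6; 5; 8; 3; 2; 7];
  [:: 0; 5; 2; 3; 4; 8; 7; 1; 6];
  [:: 0; 1; 5; 6; 2; 4; 7; 3; 8];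
  [:: 0; 7; 3; 6; 2; 1; 5; 4; 8];
  [:: 0; 2; 4; 5; 7; 3; 1; 8; 6];
  [:: 0; 3; 4; 1; 8; 5; 2; 7; 6];
  [:: 0; 4; 6; 3; 1; 2; 7; 8; 5]].
Definition bT : seq (seq nat) := [:: [:: 0; 3; 6; 2; 4; 8; 1; 5; 7];
  [:: 0; 4; 7; 2; 5; 6; 1; 3; 8];
  [:: 0; 5; 8; 2; 3; 7; 1; 4; 6]].
Definition bK4 : seq (seq nat) := [:: [:: 2; 5; 3; 1; 10; 7; 9; 8; 0];
  [:: 5; 8; 6; 4; 2; 10; 1; 11; 3];
  [:: 8; 11; 9; 7; 5; 2; 4; 0; 6];
  [:: 11; 0; 1; 10; 8; 5; 7; 3; 9];
  [:: 0; 3; 4; 2; 11; 8; 10; 6; 1];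
  [:: 3; 6; 7; 5; 0; 11; 2; 9; 4];
  [:: 6; 9; 10; 8; 3; 0; 5; 1; 7];
  [:: 9; 1; 2; 11; 6; 3; 8; 4; 10];
  [:: 1; 4; 5; 0; 9; 6; 11; 7; 2];
  [:: 4; 7; 8; 3; 1; 9; 0; 10; 5];
  [:: 7; 10; 11; 6; 4; 1; 3; 2; 8];
  [:: 10; 2; 0; 9; 7; 4; 6; 5; 11];
  [:: 2; 7; 4; 11; 9; 5; 6; 0; 3];
  [:: 5; 10; 7; 0; 1; 8; 9; 3; 6];
  [:: 8; 2; 10; 3; 4; 11; 1; 6; 9];
  [:: 11; 5; 2; 6; 7; 0; 4; 9; 1];
  [:: 0; 8; 5; 9; 10; 3; 7; 1; 4];
  [:: 3; 11; 8; 1; 2; 6; 10; 4; 7];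
  [:: 6; 0; 11; 4; 5; 9; 2; 7; 10];
  [:: 9; 3; 0; 7; 8; 1; 5; 10; 2];
  [:: 1; 6; 3; 10; 11; 4; 8; 2; 5];
  [:: 4; 9; 6; 2; 0; 7; 11; 5; 8];
  [:: 7; 1; 9; 5; 3; 10; 0; 8; 11];
  [:: 10; 4; 1; 8; 6; 2; 3; 11; 0]].
Definition bK5 : seq (seq nat) := [:: [:: 14; 0; 7; 9; 8; 4; 12; 1; 2];
  [:: 0; 3; 10; 12; 11; 7; 1; 4; 5];
  [:: 3; 6; 13; 1; 14; 10; 4; 7; 8];
  [:: 6; 9; 2; 4; 0; 13; 7; 10; 11];
  [:: 9; 12; 5; 7; 3; 2; 10; 13; 14];
  [:: 12; 1; 8; 10; 6; 5; 13; 2; 0];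
  [:: 1; 4; 11; 13; 9; 8; 2; 5; 3];
  [:: 4; 7; 14; 2; 12; 11; 5; 8; 6];
  [:: 7; 10; 0; 5; 1; 14; 8; 11; 9];
  [:: 10; 13; 3; 8; 4; 0; 11; 14; 12];
  [:: 13; 2; 6; 11; 7; 3; 14; 0; 1];
  [:: 2; 5; 9; 14; 10; 6; 0; 3; 4];
  [:: 5; 8; 12; 0; 13; 9; 3; 6; 7];
  [:: 8; 11; 1; 3; 2; 12; 6; 9; 10];
  [:: 11; 14; 4; 6; 5; 1; 9; 12; 13];
  [:: 2; 5; 0; 7; 1; 14; 9; 8; 6];
  [:: 5; 8; 3; 10; 4; 0; 12; 11; 9];
  [:: 8; 11; 6; 13; 7; 3; 1; 14; 12];
  [:: 11; 14; 9; 2; 10; 6; 4; 0; 1];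
  [:: 14; 0; 12; 5; 13; 9; 7; 3; 4];
  [:: 0; 3; 1; 8; 2; 12; 10; 6; 7];
  [:: 3; 6; 4; 11; 5; 1; 13; 9; 10];
  [:: 6; 9; 7; 14; 8; 4; 2; 12; 13];
  [:: 9; 12; 10; 0; 11; 7; 5; 1; 2];
  [:: 12; 1; 13; 3; 14; 10; 8; 4; 5];
  [:: 1; 4; 2; 6; 0; 13; 11; 7; 8];
  [:: 4; 7; 5; 9; 3; 2; 14; 10; 11];
  [:: 7; 10; 8; 12; 6; 5; 0; 13; 14];
  [:: 10; 13; 11; 1; 9; 8; 3; 2; 0];
  [:: 13; 2; 14; 4; 12; 11; 6; 5; 3];
  [:: 1; 3; 9; 0; 5; 11; 2; 4; 10];
  [:: 4; 6; 12; 3; 8; 14; 5; 7; 13];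
  [:: 7; 9; 1; 6; 11; 0; 8; 10; 2];
  [:: 10; 12; 4; 9; 14; 3; 11; 13; 5];
  [:: 13; 1; 7; 12; 0; 6; 14; 2; 8];
  [:: 12; 2; 5; 10; 4; 9; 6; 14; 7];
  [:: 1; 5; 8; 13; 7; 12; 9; 0; 10];
  [:: 4; 8; 11; 2; 10; 1; 12; 3; 13];
  [:: 7; 11; 14; 5; 13; 4; 1; 6; 2];
  [:: 10; 14; 0; 8; 2; 7; 4; 9; 5];
  [:: 13; 0; 3; 11; 5; 10; 7; 12; 8];
  [:: 2; 3; 6; 14; 8; 13; 10; 1; 11];
  [:: 5; 6; 9; 0; 11; 2; 13; 4; 14];
  [:: 8; 9; 12; 3; 14; 5; 2; 7; 0];
  [:: 11; 12; 1; 6; 0; 8; 5; 10; 3];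
  [:: 14; 1; 4; 9; 3; 11; 8; 13; 6];
  [:: 0; 4; 7; 12; 6; 14; 11; 2; 9];
  [:: 3; 7; 10; 1; 9; 0; 14; 5; 12];
  [:: 6; 10; 13; 4; 12; 3; 0; 8; 1];
  [:: 9; 13; 2; 7; 1; 6; 3; 11; 4]].
Definition bC22 : seq (seq nat) := [:: [:: 11; 0; 6; 10; 5; 8; 2; 1; 9];
  [:: 6; 3; 9; 8; 0; 11; 5; 4; 7];
  [:: 9; 1; 7; 11; 3; 6; 0; 2; 10];
  [:: 7; 4; 10; 6; 1; 9; 3; 5; 8];
  [:: 10; 2; 8; 9; 4; 7; 1; 0; 11];
  [:: 8; 5; 11; 7; 2; 10; 4; 3; 6];
  [:: 5; 9; 10; 3; 8; 2; 11; 6; 1];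
  [:: 0; 7; 8; 1; 11; 5; 6; 9; 4];
  [:: 3; 10; 11; 4; 6; 0; 9; 7; 2];
  [:: 1; 8; 6; 2; 9; 3; 7; 10; 5];
  [:: 4; 11; 9; 5; 7; 1; 10; 8; 0];
  [:: 2; 6; 7; 0; 10; 4; 8; 11; 3];
  [:: 8; 4; 6; 5; 3; 11; 0; 7; 2];
  [:: 11; 2; 9; 0; 1; 6; 3; 10; 5];
  [:: 6; 5; 7; 3; 4; 9; 1; 8; 0];
  [:: 9; 0; 10; 1; 2; 7; 4; 11; 3];
  [:: 7; 3; 8; 4; 5; 10; 2; 6; 1];
  [:: 10; 1; 11; 2; 0; 8; 5; 9; 4];
  [:: 11; 1; 3; 10; 0; 5; 9; 2; 4];
  [:: 6; 4; 1; 8; 3; 0; 7; 5; 2]].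
Definition bC33 : seq (seq nat) := [:: [:: 15; 3; 7; 13; 1; 8; 16; 6; 0];
  [:: 10; 6; 2; 16; 4; 0; 11; 1; 3];
  [:: 13; 1; 5; 11; 7; 3; 14; 4; 6];
  [:: 16; 4; 8; 14; 2; 6; 17; 7; 1];
  [:: 11; 7; 0; 17; 5; 1; 9; 2; 4];
  [:: 14; 2; 3; 9; 8; 4; 12; 5; 7];
  [:: 17; 5; 6; 12; 0; 7; 15; 8; 2];
  [:: 9; 8; 1; 15; 3; 2; 10; 0; 5];
  [:: 12; 0; 4; 10; 6; 5; 13; 3; 8];
  [:: 2; 14; 1; 12; 17; 4; 13; 5; 16];
  [:: 5; 17; 4; 15; 9; 7; 16; 8; 11];
  [:: 8; 9; 7; 10; 12; 2; 11; 0; 14];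
  [:: 0; 12; 2; 13; 15; 5; 14; 3; 17];
  [:: 3; 15; 5; 16; 10; 8; 17; 6; 9];
  [:: 6; 10; 8; 11; 13; 0; 9; 1; 12];
  [:: 1; 13; 0; 14; 16; 3; 12; 4; 15];
  [:: 4; 16; 3; 17; 11; 6; 15; 7; 10];
  [:: 7; 11; 6; 9; 14; 1; 10; 2; 13];
  [:: 9; 2; 8; 12; 16; 7; 4; 14; 0];
  [:: 12; 5; 0; 15; 11; 2; 7; 17; 3];
  [:: 15; 8; 3; 10; 14; 5; 2; 9; 6];
  [:: 10; 0; 6; 13; 17; 8; 5; 12; 1];
  [:: 13; 3; 1; 16; 9; 0; 8; 15; 4];
  [:: 16; 6; 4; 11; 12; 3; 0; 10; 7];
  [:: 11; 1; 7; 14; 15; 6; 3; 13; 2];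
  [:: 14; 4; 2; 17; 10; 1; 6; 16; 5];
  [:: 17; 7; 5; 9; 13; 4; 1; 11; 8];
  [:: 17; 13; 3; 16; 7; 2; 10; 9; 1];
  [:: 9; 16; 6; 11; 2; 5; 13; 12; 4];
  [:: 12; 11; 1; 14; 5; 8; 16; 15; 7];
  [:: 15; 14; 4; 17; 8; 0; 11; 10; 2];
  [:: 10; 17; 7; 9; 0; 3; 14; 13; 5];
  [:: 13; 9; 2; 12; 3; 6; 17; 16; 8];
  [:: 16; 12; 5; 15; 6; 1; 9; 11; 0];
  [:: 11; 15; 8; 10; 1; 4; 12; 14; 3];
  [:: 14; 10; 0; 13; 4; 7; 15; 17; 6];
  [:: 12; 9; 8; 17; 1; 0; 15; 2; 5];
  [:: 15; 12; 0; 9; 4; 3; 10; 5; 8];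
  [:: 10; 15; 3; 12; 7; 6; 13; 8; 0];
  [:: 13; 10; 6; 15; 2; 1; 16; 0; 3];
  [:: 16; 13; 1; 10; 5; 4; 11; 3; 6];
  [:: 11; 16; 4; 13; 8; 7; 14; 6; 1];
  [:: 14; 11; 7; 16; 0; 2; 17; 1; 4];
  [:: 17; 14; 2; 11; 3; 5; 9; 4; 7];
  [:: 9; 17; 5; 14; 6; 8; 12; 7; 2];
  [:: 4; 2; 13; 0; 16; 8; 9; 6; 12];
  [:: 7; 5; 16; 3; 11; 0; 12; 1; 15];
  [:: 2; 8; 11; 6; 14; 3; 15; 4; 10];
  [:: 5; 0; 14; 1; 17; 6; 10; 7; 13];
  [:: 8; 3; 17; 4; 9; 1; 13; 2; 16];
  [:: 0; 6; 9; 7; 12; 4; 16; 5; 11];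
  [:: 3; 1; 12; 2; 15; 7; 11; 8; 14];
  [:: 6; 4; 15; 5; 10; 2; 14; 0; 17];
  [:: 1; 7; 10; 8; 13; 5; 17; 3; 9];
  [:: 17; 7; 11; 10; 1; 15; 14; 8; 12];
  [:: 9; 2; 14; 13; 4; 10; 17; 0; 15];
  [:: 12; 5; 17; 16; 7; 13; 9; 3; 10];
  [:: 15; 8; 9; 11; 2; 16; 12; 6; 13];
  [:: 10; 0; 12; 14; 5; 11; 15; 1; 16];
  [:: 13; 3; 15; 17; 8; 14; 10; 4; 11];
  [:: 16; 6; 10; 9; 0; 17; 13; 7; 14];
  [:: 11; 1; 13; 12; 3; 9; 16; 2; 17];
  [:: 14; 4; 16; 15; 6; 12; 11; 5; 9];
  [:: 0; 16; 5; 9; 10; 8; 4; 11; 17];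
  [:: 3; 11; 8; 12; 13; 0; 7; 14; 9];
  [:: 6; 14; 0; 15; 16; 3; 2; 17; 12];
  [:: 1; 17; 3; 10; 11; 6; 5; 9; 15];
  [:: 4; 9; 6; 13; 14; 1; 8; 12; 10];
  [:: 7; 12; 1; 16; 17; 4; 0; 15; 13];
  [:: 2; 15; 4; 11; 9; 7; 3; 10; 16];
  [:: 5; 10; 7; 14; 12; 2; 6; 13; 11];
  [:: 8; 13; 2; 17; 15; 5; 1; 16; 14]].
Definition bC23 : seq (seq nat) := [:: [:: 0; 11; 7; 3; 14; 8; 1; 6; 2];
  [:: 1; 9; 8; 4; 12; 6; 2; 7; 0];
  [:: 2; 10; 6; 5; 13; 7; 0; 8; 1];
  [:: 14; 2; 12; 5; 3; 6; 13; 0; 10];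
  [:: 12; 0; 13; 3; 4; 7; 14; 1; 11];
  [:: 13; 1; 14; 4; 5; 8; 12; 2; 9];
  [:: 4; 14; 12; 0; 6; 3; 1; 11; 10];
  [:: 5; 12; 13; 1; 7; 4; 2; 9; 11];
  [:: 3; 13; 14; 2; 8; 5; 0; 10; 9];
  [:: 8; 0; 4; 14; 9; 1; 12; 6; 3];
  [:: 6; 1; 5; 12; 10; 2; 13; 7; 4];
  [:: 7; 2; 3; 13; 11; 0; 14; 8; 5];
  [:: 2; 0; 9; 4; 12; 1; 14; 3; 10];
  [:: 0; 1; 10; 5; 13; 2; 12; 4; 11];
  [:: 1; 2; 11; 3; 14; 0; 13; 5; 9];
  [:: 5; 1; 8; 11; 0; 9; 7; 3; 13];
  [:: 3; 2; 6; 9; 1; 10; 8; 4; 14];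
  [:: 4; 0; 7; 10; 2; 11; 6; 5; 12];
  [:: 5; 4; 11; 7; 1; 8; 12; 0; 9];
  [:: 3; 5; 9; 8; 2; 6; 13; 1; 10];
  [:: 4; 3; 10; 6; 0; 7; 14; 2; 11];
  [:: 2; 6; 14; 3; 12; 4; 10; 9; 5];
  [:: 0; 7; 12; 4; 13; 5; 11; 10; 3];
  [:: 1; 8; 13; 5; 14; 3; 9; 11; 4];
  [:: 2; 13; 4; 9; 1; 11; 5; 3; 8];
  [:: 0; 14; 5; 10; 2; 9; 3; 4; 6];
  [:: 1; 12; 3; 11; 0; 10; 4; 5; 7];
  [:: 14; 5; 7; 9; 1; 3; 8; 4; 11];
  [:: 12; 3; 8; 10; 2; 4; 6; 5; 9];
  [:: 13; 4; 6; 11; 0; 5; 7; 3; 10];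
  [:: 6; 9; 0; 3; 12; 2; 7; 8; 4];
  [:: 7; 10; 1; 4; 13; 0; 8; 6; 5];
  [:: 8; 11; 2; 5; 14; 1; 6; 7; 3];
  [:: 7; 3; 1; 13; 0; 9; 14; 5; 12];
  [:: 8; 4; 2; 14; 1; 10; 12; 3; 13];
  [:: 6; 5; 0; 12; 2; 11; 13; 4; 14];
  [:: 9; 7; 4; 10; 6; 1; 0; 14; 2];
  [:: 10; 8; 5; 11; 7; 2; 1; 12; 0];
  [:: 11; 6; 3; 9; 8; 0; 2; 13; 1]].
Definition bC32 : seq (seq nat) := [:: [:: 9; 5; 1; 12; 8; 2; 10; 0; 11];
  [:: 10; 3; 2; 13; 6; 0; 11; 1; 9];
  [:: 11; 4; 0; 14; 7; 1; 9; 2; 10];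
  [:: 8; 11; 6; 14; 12; 0; 7; 9; 4];
  [:: 6; 9; 7; 12; 13; 1; 8; 10; 5];
  [:: 7; 10; 8; 13; 14; 2; 6; 11; 3];
  [:: 13; 8; 6; 9; 0; 12; 10; 5; 4];
  [:: 14; 6; 7; 10; 1; 13; 11; 3; 5];
  [:: 12; 7; 8; 11; 2; 14; 9; 4; 3];
  [:: 2; 9; 13; 8; 3; 10; 6; 0; 12];
  [:: 0; 10; 14; 6; 4; 11; 7; 1; 13];
  [:: 1; 11; 12; 7; 5; 9; 8; 2; 14];
  [:: 11; 9; 3; 13; 6; 10; 8; 12; 4];
  [:: 9; 10; 4; 14; 7; 11; 6; 13; 5];
  [:: 10; 11; 5; 12; 8; 9; 7; 14; 3];
  [:: 14; 10; 2; 5; 9; 3; 1; 12; 7];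
  [:: 12; 11; 0; 3; 10; 4; 2; 13; 8];
  [:: 13; 9; 1; 4; 11; 5; 0; 14; 6];
  [:: 14; 13; 5; 1; 10; 2; 6; 9; 3];
  [:: 12; 14; 3; 2; 11; 0; 7; 10; 4];
  [:: 13; 12; 4; 0; 9; 1; 8; 11; 5];
  [:: 11; 0; 8; 12; 6; 13; 4; 3; 14];
  [:: 9; 1; 6; 13; 7; 14; 5; 4; 12];
  [:: 10; 2; 7; 14; 8; 12; 3; 5; 13];
  [:: 11; 7; 13; 3; 10; 5; 14; 12; 2];
  [:: 9; 8; 14; 4; 11; 3; 12; 13; 0];
  [:: 10; 6; 12; 5; 9; 4; 13; 14; 1];
  [:: 8; 14; 1; 3; 10; 12; 2; 13; 5];
  [:: 6; 12; 2; 4; 11; 13; 0; 14; 3];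
  [:: 7; 13; 0; 5; 9; 14; 1; 12; 4];
  [:: 0; 3; 9; 12; 6; 11; 1; 2; 13];
  [:: 1; 4; 10; 13; 7; 9; 2; 0; 14];
  [:: 2; 5; 11; 14; 8; 10; 0; 1; 12];
  [:: 1; 12; 10; 7; 9; 3; 8; 14; 6];
  [:: 2; 13; 11; 8; 10; 4; 6; 12; 7];
  [:: 0; 14; 9; 6; 11; 5; 7; 13; 8];
  [:: 3; 1; 13; 4; 0; 10; 9; 8; 11];
  [:: 4; 2; 14; 5; 1; 11; 10; 6; 9];
  [:: 5; 0; 12; 3; 2; 9; 11; 7; 10]].

Lemma chkK3 : chk 3 alK bK3. Proof. by vm_compute. Qed.
Lemma chkT : chk 3 alT bT. Proof. by vm_compute. Qed.
Lemma chkK4 : chk 4 alK bK4. Proof. by vm_compute. Qed.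
Lemma chkK5 : chk 5 alK bK5. Proof. by vm_compute. Qed.
Lemma chkC22 : chk 4 (alC 2) bC22. Proof. by vm_compute. Qed.
Lemma chkC33 : chk 6 (alC 3) bC33. Proof. Time by vm_compute. Qed.
Lemma chkC23 : chk 5 (alC 2) bC23. Proof. by vm_compute. Qed.
Lemma chkC32 : chk 5 (alC 3) bC32. Proof. by vm_compute. Qed.

Section Ar.
Variable m : nat.
Hypothesis Hm : 3 <= m.

Definition q := m %/ 3.
Definition r := m %% 3.
Definition glo0 b := if b < 3 * (q - 1) then 3 * (b %/ 3) else 3 * (q - 1).
Definition ghi0 b := if b < 3 * (q - 1) then 3 * (b %/ 3) + 3 else m.
Definition slo0 b := if (r == 1) && (m - 2 <= b) then m - 2 else
                     if (r == 1) && (m - 4 <= b) then m - 4 else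
                     if (r == 2) && (m - 2 <= b) then m - 2 else 3 * (b %/ 3).
Definition shi0 b := if (r == 1) && (m - 2 <= b) then m else
                     if (r == 1) && (m - 4 <= b) then m - 2 else
                     if (r == 2) && (m - 2 <= b) then m else 3 * (b %/ 3) + 3.
Definition glo b := if b < m then glo0 b else m + glo0 (b - m).
Definition ghi b := if b < m then ghi0 b else m + ghi0 (b - m).
Definition slo b := if b < m then slo0 b else m + slo0 (b - m).
Definition shi b := if b < m then shi0 b else m + shi0 (b - m).

Ltac crush := rewrite /glo /ghi /slo /shi /glo0 /ghi0 /slo0 /shi0 /q /r;
  repeat (case: ifP => ?); lia.

Lemma F0 b : b < m -> [/\ glo0 b <= slo0 b, slo0 b <= b, b < shi0 b, shi0 b <= ghi0 b & ghi0 b <= m].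
Proof. move=> hb. rewrite /glo0 /ghi0 /slo0 /shi0 /q /r. repeat (case: ifP => ?); split; lia. Qed.

Lemma Fb b : b < 2 * m -> [/\ glo b <= slo b, slo b <= b, b < shi b, shi b <= ghi b & ghi b <= 2 * m].
Proof. move=> hb. rewrite /glo /ghi /slo /shi /glo0 /ghi0 /slo0 /shi0 /q /r. repeat (case: ifP => ?); split; lia. Qed.

Lemma Fsz b : b < 2 * m -> (shi b - slo b == 2) || (shi b - slo b == 3).
Proof. move=> hb. crush. Qed.

Lemma Fgz b : b < 2 * m -> [|| ghi b - glo b == 3, ghi b - glo b == 4 | ghi b - glo b == 5].
Proof. move=> hb. crush. Qed.

Lemma Fside b : b < 2 * m -> (b < m -> ghi b <= m) /\ (m <= b -> m <= glo b).
Proof. move=> hb. rewrite /glo /ghi /slo /shi /glo0 /ghi0 /slo0 /shi0 /q /r. repeat (case: ifP => ?); split; lia. Qed.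

Lemma Fs2 b x : b < 2 * m -> slo b <= x < shi b -> slo x = slo b /\ shi x = shi b.
Proof. move=> hb. rewrite /glo /ghi /slo /shi /glo0 /ghi0 /slo0 /shi0 /q /r. repeat (case: ifP => ?); move=> ?; split; lia. Qed.

Lemma Fg2 b x : b < 2 * m -> glo b <= x < ghi b -> glo x = glo b /\ ghi x = ghi b.
Proof. move=> hb. rewrite /glo /ghi /slo /shi /glo0 /ghi0 /slo0 /shi0 /q /r. repeat (case: ifP => ?); move=> ?; split; lia. Qed.
End Ar.

Section Own.
Variable m : nat.
Hypothesis Hm : 3 <= m.

Lemma Fg3 b x : b < 2 * m -> x < 2 * m -> b <= x -> (x < ghi m b) || (ghi m b <= glo m x).
Proof. move=> hb hx hbx. rewrite /glo /ghi /slo /shi /glo0 /ghi0 /slo0 /shi0 /q /r. repeat (case: ifP => ?); lia. Qed.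
Lemma Fs3 b x : b < 2 * m -> x < 2 * m -> b <= x -> (x < shi m b) || (shi m b <= slo m x).
Proof. move=> hb hx hbx. rewrite /glo /ghi /slo /shi /glo0 /ghi0 /slo0 /shi0 /q /r. repeat (case: ifP => ?); lia. Qed.

Definition piece := (nat * nat * nat * nat * nat)%type.
Definition owner (b : nat * nat * nat) : piece :=
  let '(b1, b2, b3) := b in
  if b3 < ghi m b1 then (0, glo m b1, ghi m b1, 0, 0)
  else if (b2 < shi m b1) || (slo m b3 <= b2) then (1, slo m b1, shi m b1, slo m b3, shi m b3)
  else (2, b1, b2, b3, 0).
End Own.

Definition pblocks (p : piece) : seq nat :=
  let '(t, x1, x2, x3, x4) := p in
  if t == 0 then iota x1 (x2 - x1) else if t == 1 then iota x1 (x2 - x1) ++ iota x3 (x4 - x3)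
  else [:: x1; x2; x3].

Definition pal (p : piece) : nat -> nat -> nat -> bool :=
  let '(t, x1, x2, x3, x4) := p in
  if t == 0 then alK else if t == 1 then alC (x2 - x1) else alT.

Definition covA (A : seq nat) (al : nat -> nat -> nat -> bool) (b : nat * nat * nat) : bool :=
  let '(b1, b2, b3) := b in
  [&& b1 \in A, b2 \in A, b3 \in A & al (index b1 A) (index b2 A) (index b3 A)].
Definition covers (p : piece) (b : nat * nat * nat) : bool := covA (pblocks p) (pal p) b.

Lemma index_iota lo n b : lo <= b < lo + n -> index b (iota lo n) = b - lo.
Proof.
move=> hb. have hi : b - lo < size (iota lo n) by rewrite size_iota; lia.
have := index_uniq 0 hi (iota_uniq lo n). rewrite nth_iota; last by lia.
by have -> : lo + (b - lo) = b by lia.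
Qed.

Lemma index_iota' lo hi b : lo <= b < hi -> index b (iota lo (hi - lo)) = b - lo.
Proof. move=> h; apply: index_iota; lia. Qed.

Lemma covK lo hi b1 b2 b3 : lo <= hi ->
  covers (0, lo, hi, 0, 0) (b1, b2, b3) =
  [&& lo <= b1 < hi, lo <= b2 < hi, lo <= b3 < hi & ~~ ((b1 == b2) && (b2 == b3))].
Proof.
move=> h. rewrite /covers /covA /= !mem_iota.
have E : lo + (hi - lo) = hi by lia.
rewrite E.
case: (boolP (lo <= b1 < hi)) => // h1; case: (boolP (lo <= b2 < hi)) => // h2;
case: (boolP (lo <= b3 < hi)) => // h3 /=.
rewrite !index_iota ?E // /alK. apply/idP/idP; lia.
Qed.

Lemma covC lo1 hi1 lo2 hi2 b1 b2 b3 : lo1 <= hi1 -> hi1 <= lo2 -> lo2 <= hi2 ->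
  covers (1, lo1, hi1, lo2, hi2) (b1, b2, b3) =
  [&& (lo1 <= b1 < hi1) || (lo2 <= b1 < hi2), (lo1 <= b2 < hi1) || (lo2 <= b2 < hi2),
      (lo1 <= b3 < hi1) || (lo2 <= b3 < hi2),
      (b1 < hi1) || (b2 < hi1) || (b3 < hi1) & (lo2 <= b1) || (lo2 <= b2) || (lo2 <= b3)].
Proof.
move=> h1 h2 h3. rewrite /covers /covA /= !mem_cat !mem_iota.
have E1 : lo1 + (hi1 - lo1) = hi1 by lia.
have E2 : lo2 + (hi2 - lo2) = hi2 by lia.
rewrite E1 E2 !index_cat !mem_iota E1 size_iota.
case: (boolP (lo1 <= b1 < hi1)) => a1; case: (boolP (lo2 <= b1 < hi2)) => a1' //=;
case: (boolP (lo1 <= b2 < hi1)) => a2; case: (boolP (lo2 <= b2 < hi2)) => a2' //=;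
case: (boolP (lo1 <= b3 < hi1)) => a3; case: (boolP (lo2 <= b3 < hi2)) => a3' //=;
rewrite ?(index_iota' a1) ?(index_iota' a2) ?(index_iota' a3) ?(index_iota' a1') ?(index_iota' a2') ?(index_iota' a3') /alC; apply/idP/idP; lia.
Qed.

Lemma index_inj (T : eqType) (s : seq T) x y : x \in s -> y \in s -> (index x s == index y s) = (x == y).
Proof.
move=> hx hy; apply/eqP/eqP => [E|->] //.
by rewrite -(nth_index x hx) -(nth_index x hy) E.
Qed.

Lemma covT a b c b1 b2 b3 :
  covers (2, a, b, c, 0) (b1, b2, b3) =
  [&& (b1 == a) || (b1 == b) || (b1 == c), (b2 == a) || (b2 == b) || (b2 == c),
      (b3 == a) || (b3 == b) || (b3 == c) & [&& b1 != b2, b2 != b3 & b1 != b3]].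
Proof.
rewrite /covers /covA; cbv beta iota zeta. rewrite [pblocks _]/= [pal _]/=.
have mE x : (x \in [:: a; b; c]) = (x == a) || (x == b) || (x == c) by rewrite !inE orbA.
rewrite !mE.
case: (boolP ((b1 == a) || (b1 == b) || (b1 == c))) => // h1;
case: (boolP ((b2 == a) || (b2 == b) || (b2 == c))) => // h2;
case: (boolP ((b3 == a) || (b3 == b) || (b3 == c))) => // h3.
rewrite !andTb /alT !index_inj // ?mE //.
Qed.

Section OwnL.
Variable m : nat.
Hypothesis Hm : 3 <= m.

Lemma ownE b1 b2 b3 : b1 <= b2 <= b3 -> b3 < 2 * m -> ~~ ((b1 == b2) && (b2 == b3)) ->
  covers (owner m (b1, b2, b3)) (b1, b2, b3).
Proof.
move=> hs hb3 hne.
have [f1 f2 f3 f4 f5] := Fb Hm (b:=b1) ltac:(lia).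
have [g1 g2 g3 g4 g5] := Fb Hm (b:=b3) hb3.
have G3 := Fg3 Hm (b:=b1) (x:=b3) ltac:(lia) hb3 ltac:(lia).
rewrite /owner. case: ifP => h1.
  rewrite covK; last lia. lia.
case: ifP => h2.
  rewrite covC; try lia.
rewrite covT. lia.
Qed.

End OwnL.

Section OwnU.
Variable m : nat.
Hypothesis Hm : 3 <= m.

Lemma ownU c1 c2 c3 b1 b2 b3 : c1 <= c2 <= c3 -> c3 < 2 * m -> ~~ ((c1 == c2) && (c2 == c3)) ->
  b1 <= b2 <= b3 -> b3 < 2 * m -> covers (owner m (c1, c2, c3)) (b1, b2, b3) ->
  owner m (b1, b2, b3) = owner m (c1, c2, c3) /\
  [/\ c3 < m -> b3 < m, m <= c1 -> m <= b1 & c1 < m <= c3 -> b1 < m <= b3].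
Proof.
move=> hc hc3 hcne hb hb3.
have [f1 f2 f3 f4 f5] := Fb Hm (b:=c1) ltac:(lia).
have [g1 g2 g3 g4 g5] := Fb Hm (b:=c3) hc3.
have [s1 s2] := Fside Hm (b:=c1) ltac:(lia).
have [s3 s4] := Fside Hm (b:=c3) hc3.
rewrite [owner m (c1, c2, c3)]/owner.
case: ifP => h1.
  rewrite covK; last lia. move=> cv.
  have hb1 : glo m c1 <= b1 < ghi m c1 by move: cv; clear; lia.
  have hb3' : b3 < ghi m c1 by move: cv; clear; lia.
  have hb3'' : glo m c1 <= b3 by move: cv; clear; lia.
  have [A1a A1b] := Fg2 Hm (b:=c1) (x:=b1) ltac:(lia) hb1.
  clear cv.
  rewrite /owner A1b hb3'. split; [congr (_, _, _, _, _); lia | split; lia].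
have G3 := Fg3 Hm (b:=c1) (x:=c3) ltac:(lia) hc3 ltac:(lia).
have hG : ghi m c1 <= glo m c3 by move: G3 h1; clear; lia.
case: ifP => h2.
  rewrite covC; try lia. move=> cv.
  have hb1 : slo m c1 <= b1 < shi m c1.
    move: cv hb hG f4 g1 g2; clear; lia.
  have hb3' : slo m c3 <= b3 < shi m c3.
    move: cv hb hG f4 g1 g2 hb1; clear; lia.
  have hb2 : (b2 < shi m c1) || (slo m c3 <= b2).
    move: cv hb hG f4 g1 g2 hb1; clear; lia.
  clear cv.
  have [A1a A1b] := Fg2 Hm (b:=c1) (x:=b1) ltac:(lia) ltac:(lia).
  have [A2a A2b] := Fs2 Hm (b:=c1) (x:=b1) ltac:(lia) hb1.
  have [A3a A3b] := Fs2 Hm (b:=c3) (x:=b3) hc3 hb3'.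
  rewrite /owner A1b A2a A2b A3a A3b.
  have -> : (b3 < ghi m c1) = false by apply/negbTE; lia.
  rewrite hb2. split; [by [] | split; lia].
rewrite covT => cv.
have [e1 [e2 e3]] : b1 = c1 /\ b2 = c2 /\ b3 = c3 by move: cv hb hc; clear; lia.
subst. rewrite /owner h1 h2. split => //; split; lia.
Qed.
End OwnU.

Lemma set3_eqE (T : finType) (x1 x2 x3 y1 y2 y3 : T) :
  ([set x1; x2; x3] == [set y1; y2; y3]) =
  [&& (x1 == y1) || (x1 == y2) || (x1 == y3), (x2 == y1) || (x2 == y2) || (x2 == y3),
      (x3 == y1) || (x3 == y2) || (x3 == y3), (y1 == x1) || (y1 == x2) || (y1 == x3),
      (y2 == x1) || (y2 == x2) || (y2 == x3) & (y3 == x1) || (y3 == x2) || (y3 == x3)].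
Proof.
rewrite eqEsubset !subUset !sub1set !inE.
by rewrite -!andbA.
Qed.

Section Piece.
Variable N : nat.
Variable m : nat.
Hypothesis HN : 6 * m <= N.+1.
Variable A : seq nat.
Variable al : nat -> nat -> nat -> bool.
Variable bc : seq (seq nat).
Hypothesis uA : uniq A.
Hypothesis bA : all (fun b => b < 2 * m) A.
Hypothesis Hchk : chk (size A) al bc.

Definition blk (x : 'I_N.+1) : nat := x %/ 3.
Definition gv (l : nat) : 'I_N.+1 := inord (3 * nth 0 A (l %/ 3) + l %% 3).

Lemma nthA l : l < 3 * size A -> nth 0 A (l %/ 3) < 2 * m.
Proof.
move=> hl. have h : l %/ 3 < size A by lia.
by move/allP: bA => /(_ _ (mem_nth 0 h)).
Qed.

Lemma gv_val l : l < 3 * size A -> nat_of_ord (gv l) = 3 * nth 0 A (l %/ 3) + l %% 3.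
Proof. move=> hl. have := nthA hl => h. rewrite /gv inordK //. lia. Qed.

Lemma gv_inj l l' : l < 3 * size A -> l' < 3 * size A -> (gv l == gv l') = (l == l').
Proof.
move=> hl hl'. apply/eqP/eqP => [E|->] //.
have := congr1 (@nat_of_ord _) E. rewrite !gv_val // => E2.
have E3 : nth 0 A (l %/ 3) = nth 0 A (l' %/ 3) by lia.
have E4 : l %/ 3 = l' %/ 3.
  have h1 : l %/ 3 < size A by lia. have h2 : l' %/ 3 < size A by lia.
  by have := nth_uniq 0 h1 h2 uA; rewrite E3 eqxx => /esym/eqP.
lia.
Qed.

Lemma blk_gv l : l < 3 * size A -> blk (gv l) = nth 0 A (l %/ 3).
Proof. move=> hl. rewrite /blk gv_val //. lia. Qed.

Definition mk (c : seq nat) : 9.-tuple 'I_N.+1 := [tuple gv (nth 0 c i) | i < 9].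

Lemma ordS_val (i : 'I_9) : val (ordS i) = (i + 1) %% 9.
Proof. by rewrite /= addn1. Qed.

Lemma mem_cyc (c : seq nat) e : (e \in cyc_edges (mk c)) =
  [exists i : 'I_9, e == [set gv (nth 0 c i); gv (nth 0 c ((i + 1) %% 9)); gv (nth 0 c ((i + 2) %% 9))]].
Proof.
have E (i : 'I_9) : tnth (mk c) i = gv (nth 0 c i) by rewrite tnth_mktuple.
have E1 (i : 'I_9) : nat_of_ord (ordS i) = (i + 1) %% 9 by rewrite /= addn1.
have E2 (i : 'I_9) : nat_of_ord (ordS (ordS i)) = (i + 2) %% 9.
  rewrite !E1. have := ltn_ord i. lia.
apply/imsetP/existsP => [[i _ ->]|[i /eqP ->]]; exists i => //; by rewrite !E E1 E2.
Qed.

Lemma chk_cyc c : c \in bc ->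
  [/\ size c = 9, uniq c, forall x, x \in c -> x < 3 * size A &
   forall i, i < 9 -> let '(a, b, d) := wnd c i in al (a %/ 3) (b %/ 3) (d %/ 3)].
Proof.
move=> hc. move: Hchk => /andP [/allP /(_ c hc) /and4P [/eqP h1 h2 /allP h3 /allP h4] _].
split => // i hi. apply: h4. by rewrite mem_iota.
Qed.

Lemma chk_cnt x y z : x < 3 * size A -> y < 3 * size A -> z < 3 * size A ->
  x != y -> y != z -> x != z ->
  count (fun c => edge_in c (x, y, z)) bc = al (x %/ 3) (y %/ 3) (z %/ 3).
Proof.
move=> hx hy hz nxy nyz nxz.
move: Hchk => /andP [_ /allP /(_ x) H]. rewrite mem_iota in H.
have /allP /(_ y) := H ltac:(lia). rewrite mem_iota => H2.
have /allP /(_ z) := H2 ltac:(lia). rewrite mem_iota => H3.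
have := H3 ltac:(lia). rewrite nxy nyz nxz /= => /eqP -> //.
Qed.

Lemma exists_iota9 (P : nat -> bool) : [exists i : 'I_9, P i] = has P (iota 0 9).
Proof.
apply/existsP/hasP => [[i hi]|[i]]; first by exists (nat_of_ord i) => //; rewrite mem_iota ltn_ord.
rewrite mem_iota => /andP [_ hi] hP. by exists (Ordinal hi).
Qed.

Lemma mem_cyc_local c lX lY lZ : c \in bc -> lX < 3 * size A -> lY < 3 * size A -> lZ < 3 * size A ->
  ([set gv lX; gv lY; gv lZ] \in cyc_edges (mk c)) = edge_in c (lX, lY, lZ).
Proof.
move=> hc hX hY hZ. have [hs _ hcb _] := chk_cyc hc.
rewrite mem_cyc (exists_iota9 (fun i => [set gv lX; gv lY; gv lZ] == [set gv (nth 0 c i); gv (nth 0 c ((i + 1) %% 9)); gv (nth 0 c ((i + 2) %% 9))])) /edge_in. apply: eq_in_has => i. rewrite mem_iota => /andP [_ hi].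
have k1 : nth 0 c i < 3 * size A by apply: hcb; apply: mem_nth; rewrite hs.
have k2 : nth 0 c ((i + 1) %% 9) < 3 * size A.
  by apply: hcb; apply: mem_nth; rewrite hs ltn_mod.
have k3 : nth 0 c ((i + 2) %% 9) < 3 * size A.
  by apply: hcb; apply: mem_nth; rewrite hs ltn_mod.
rewrite eq_sym set3_eqE !gv_inj //.
Qed.

Lemma gv_blk (X : 'I_N.+1) : blk X \in A -> gv (3 * index (blk X) A + X %% 3) = X.
Proof.
move=> hX. have hi : index (blk X) A < size A by rewrite index_mem.
apply: val_inj => /=. rewrite gv_val; last lia.
have -> : (3 * index (blk X) A + X %% 3) %/ 3 = index (blk X) A by lia.
rewrite nth_index // /blk. lia.
Qed.

Lemma inrange_cyc c e (X : 'I_N.+1) : c \in bc -> e \in cyc_edges (mk c) -> X \in e -> blk X \in A.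
Proof.
move=> hc. have [hs _ hcb _] := chk_cyc hc.
rewrite mem_cyc => /existsP [i /eqP ->]. rewrite !inE.
have blkin j : j < 9 -> blk (gv (nth 0 c j)) \in A.
  move=> hj. have hl : nth 0 c j < 3 * size A by apply: hcb; apply: mem_nth; rewrite hs.
  rewrite blk_gv //. apply: mem_nth. by rewrite ltn_divLR // mulnC.
by case/orP => [/orP [] | ] /eqP ->; apply: blkin; rewrite ?ltn_mod.
Qed.

Lemma count_piece (X Y Z : 'I_N.+1) : X != Y -> Y != Z -> X != Z ->
  count (fun t => [set X; Y; Z] \in cyc_edges t) (map mk bc) = covA A al (blk X, blk Y, blk Z).
Proof.
move=> nXY nYZ nXZ. rewrite count_map /covA.
case: (boolP (blk X \in A)) => hX; last first.
  rewrite /=; apply/eqP; rewrite -leqn0 leqNgt -has_count; apply/hasPn => c hc /=; apply/negP => hin.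
  by move: hX; rewrite (inrange_cyc hc hin) // !inE eqxx.
case: (boolP (blk Y \in A)) => hY; last first.
  rewrite /=; apply/eqP; rewrite -leqn0 leqNgt -has_count; apply/hasPn => c hc /=; apply/negP => hin.
  by move: hY; rewrite (inrange_cyc hc hin) // !inE eqxx ?orbT.
case: (boolP (blk Z \in A)) => hZ; last first.
  rewrite /=; apply/eqP; rewrite -leqn0 leqNgt -has_count; apply/hasPn => c hc /=; apply/negP => hin.
  by move: hZ; rewrite (inrange_cyc hc hin) // !inE eqxx ?orbT.
rewrite /=.
have iX : index (blk X) A < size A by rewrite index_mem.
have iY : index (blk Y) A < size A by rewrite index_mem.
have iZ : index (blk Z) A < size A by rewrite index_mem.
rewrite -{1}(gv_blk hX) -{1}(gv_blk hY) -{1}(gv_blk hZ).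
rewrite (eq_in_count (a2 := fun c => edge_in c (3 * index (blk X) A + X %% 3, 3 * index (blk Y) A + Y %% 3, 3 * index (blk Z) A + Z %% 3))); last first.
  move=> c hc /=. apply: mem_cyc_local => //; lia.
rewrite chk_cnt; try lia.
- by rewrite !(_ : forall a b, (3 * a + b %% 3) %/ 3 = a) // => a b; lia.
- by apply: contra nXY => /eqP E; rewrite -(gv_blk hX) -(gv_blk hY) E.
- by apply: contra nYZ => /eqP E; rewrite -(gv_blk hY) -(gv_blk hZ) E.
- by apply: contra nXZ => /eqP E; rewrite -(gv_blk hX) -(gv_blk hZ) E.
Qed.

Lemma uniq_mk c : c \in bc -> uniq (mk c).
Proof.
move=> hc. have [hs hu hcb _] := chk_cyc hc.
rewrite /mk /mktuple /= map_inj_uniq ?enum_uniq //.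
move=> i j /eqP. rewrite gv_inj; try (apply: hcb; apply: mem_nth; rewrite hs //).
rewrite nth_uniq ?hs // => /eqP E. exact: val_inj.
Qed.

Lemma edge_piece c e : c \in bc -> e \in cyc_edges (mk c) ->
  exists X Y Z, [/\ X != Y, Y != Z, X != Z, e = [set X; Y; Z] & covA A al (blk X, blk Y, blk Z)].
Proof.
move=> hc. have [hs hu hcb hw] := chk_cyc hc.
rewrite mem_cyc => /existsP [i /eqP ->].
have hi := ltn_ord i.
set a := nth 0 c i. set b := nth 0 c ((i + 1) %% 9). set d := nth 0 c ((i + 2) %% 9).
have ha : a < 3 * size A by apply: hcb; apply: mem_nth; rewrite hs.
have hb : b < 3 * size A by apply: hcb; apply: mem_nth; rewrite hs ltn_mod.
have hd : d < 3 * size A by apply: hcb; apply: mem_nth; rewrite hs ltn_mod.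
have nab : a != b by rewrite /a /b nth_uniq ?hs ?ltn_mod //; lia.
have nbd : b != d by rewrite /b /d nth_uniq ?hs ?ltn_mod //; lia.
have nad : a != d by rewrite /a /d nth_uniq ?hs ?ltn_mod //; lia.
exists (gv a), (gv b), (gv d); split => //; rewrite ?gv_inj //.
have hw' := hw i hi. rewrite /wnd -/a -/b -/d in hw'.
have ix l : l < 3 * size A -> index (nth 0 A (l %/ 3)) A = l %/ 3.
  move=> hl. apply: index_uniq => //. by rewrite ltn_divLR // mulnC.
have mx l : l < 3 * size A -> nth 0 A (l %/ 3) \in A.
  move=> hl. apply: mem_nth. by rewrite ltn_divLR // mulnC.
rewrite /covA !blk_gv // !mx // !ix //.
Qed.
End Piece.

Lemma count1 (T : eqType) (P : pred T) (s : seq T) q : uniq s -> q \in s -> P q ->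
  (forall p, p \in s -> P p -> p = q) -> count P s = 1.
Proof.
move=> us qs Pq H. rewrite (eq_in_count (a2 := pred1 q)); first by rewrite count_uniq_mem // qs.
move=> p ps /=. apply/idP/eqP => [|->] //. exact: H.
Qed.

Definition symal (al : nat -> nat -> nat -> bool) :=
  (forall a b c, al a b c = al b a c) /\ (forall a b c, al a b c = al a c b).

Lemma covA_sym A al : symal al -> forall b1 b2 b3,
  covA A al (b1, b2, b3) = covA A al (b2, b1, b3) /\ covA A al (b1, b2, b3) = covA A al (b1, b3, b2).
Proof.
move=> [s1 s2] b1 b2 b3. rewrite /covA. split.
  case: (b1 \in A); case: (b2 \in A); case: (b3 \in A) => //=; by rewrite s1.
case: (b1 \in A); case: (b2 \in A); case: (b3 \in A) => //=; by rewrite s2.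
Qed.

Lemma symK : symal alK.
Proof. split => a b c; rewrite /alK; apply/idP/idP; lia. Qed.
Lemma symC s : symal (alC s).
Proof. split => a b c; rewrite /alC; apply/idP/idP; lia. Qed.
Lemma symT : symal alT.
Proof. split => a b c; rewrite /alT; apply/idP/idP; lia. Qed.

Lemma set3C1 (T : finType) (x y z : T) : [set x; y; z] = [set y; x; z].
Proof. by apply/setP => w; rewrite !inE; case: (w == x); case: (w == y); case: (w == z). Qed.
Lemma set3C2 (T : finType) (x y z : T) : [set x; y; z] = [set x; z; y].
Proof. by apply/setP => w; rewrite !inE; case: (w == x); case: (w == y); case: (w == z). Qed.

Lemma sort3 n (F : 'I_n -> 'I_n -> 'I_n -> bool) :
  (forall a b c, F a b c = F b a c) -> (forall a b c, F a b c = F a c b) ->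
  forall X Y Z : 'I_n, X != Y -> Y != Z -> X != Z ->
  exists X' Y' Z' : 'I_n, [/\ (X' < Y' < Z')%N, [set X; Y; Z] = [set X'; Y'; Z'] & F X Y Z = F X' Y' Z'].
Proof.
move=> s1 s2 X Y Z nXY nYZ nXZ.
have lt_neq (a b : 'I_n) : a != b -> (a < b)%N || (b < a)%N.
  move=> h. rewrite -neq_ltn. by apply: contra h => /eqP E; apply/eqP; apply: val_inj.
have [hXY|hYX] := orP (lt_neq _ _ nXY); have [hYZ|hZY] := orP (lt_neq _ _ nYZ);
  have [hXZ|hZX] := orP (lt_neq _ _ nXZ); try (exfalso; lia).
- exists X, Y, Z; split => //; lia.
- exists X, Z, Y; split; [lia | exact: set3C2 | exact: s2].
- exists Z, X, Y; split; [lia | by rewrite set3C2 set3C1 | by rewrite s2 s1].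
- exists Y, X, Z; split; [lia | exact: set3C1 | exact: s1].
- exists Y, Z, X; split; [lia | by rewrite set3C1 set3C2 | by rewrite s1 s2].
- exists Z, Y, X; split; [lia | by rewrite set3C1 set3C2 set3C1 | by rewrite s1 s2 s1].
Qed.

Definition pbase (p : piece) : seq (seq nat) :=
  let '(t, x1, x2, x3, x4) := p in
  if t == 0 then (if x2 - x1 == 3 then bK3 else if x2 - x1 == 4 then bK4 else bK5)
  else if t == 1 then (if x2 - x1 == 2 then (if x4 - x3 == 2 then bC22 else bC23)
                       else (if x4 - x3 == 2 then bC32 else bC33))
  else bT.

Section Valid.
Variable m : nat.
Hypothesis Hm : 3 <= m.

Lemma own_valid c1 c2 c3 : c1 <= c2 <= c3 -> c3 < 2 * m -> ~~ ((c1 == c2) && (c2 == c3)) ->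
  [/\ uniq (pblocks (owner m (c1, c2, c3))), all (fun b => b < 2 * m) (pblocks (owner m (c1, c2, c3))),
      chk (size (pblocks (owner m (c1, c2, c3)))) (pal (owner m (c1, c2, c3))) (pbase (owner m (c1, c2, c3)))
    & symal (pal (owner m (c1, c2, c3)))].
Proof.
move=> hc hc3 hne.
have [f1 f2 f3 f4 f5] := Fb Hm (b:=c1) ltac:(lia).
have [g1 g2 g3 g4 g5] := Fb Hm (b:=c3) hc3.
have G3 := Fg3 Hm (b:=c1) (x:=c3) ltac:(lia) hc3 ltac:(lia).
rewrite /owner. case: ifP => h1.
  rewrite /pblocks /pal /pbase /= size_iota. split.
  - exact: iota_uniq.
  - apply/allP => x; rewrite mem_iota; lia.
  - have := Fgz Hm (b:=c1) ltac:(lia).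
    case/or3P => /eqP ->; [exact: chkK3 | exact: chkK4 | exact: chkK5].
  - exact: symK.
case: ifP => h2.
  rewrite /pblocks /pal /pbase /= size_cat !size_iota. split.
  - rewrite cat_uniq !iota_uniq /= andbT. apply/hasPn => x; rewrite !mem_iota; lia.
  - apply/allP => x; rewrite mem_cat !mem_iota; lia.
  - have := Fsz Hm (b:=c1) ltac:(lia). have := Fsz Hm (b:=c3) hc3.
    case/orP => /eqP -> ; case/orP => /eqP -> /=; [exact: chkC22 | exact: chkC32 | exact: chkC23 | exact: chkC33].
  - exact: symC.
rewrite /pblocks /pal /pbase /=. split.
- rewrite !inE andbT. apply/andP; split; [apply/norP; split|]; apply/eqP; lia.
- rewrite /= andbT. apply/and3P; split; lia.
- exact: chkT.
- exact: symT.
Qed.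
End Valid.

Section Class.
Variable N m : nat.
Hypothesis HN : N.+1 = 6 * m.
Hypothesis Hm : 3 <= m.

Definition BT : seq (nat * nat * nat) :=
  flatten [seq flatten [seq [seq (x, y, z) | z <- iota y (2 * m - y)] | y <- iota x (2 * m - x)]
          | x <- iota 0 (2 * m)].

Lemma memBT x y z : x <= y <= z -> z < 2 * m -> (x, y, z) \in BT.
Proof.
move=> h hz. apply/flatten_mapP. exists x; first by rewrite mem_iota; lia.
apply/flatten_mapP. exists y; first by rewrite mem_iota; lia.
apply/mapP. exists z => //. rewrite mem_iota; lia.
Qed.

Definition pcyc (p : piece) := map (mk N (pblocks p)) (pbase p).
Definition Lcls (cls : pred (nat * nat * nat)) := undup (map (owner m) (filter cls BT)).
Definition csX cls := flatten (map pcyc (Lcls cls)).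

Lemma blk_lt (X : 'I_N.+1) : blk X < 2 * m.
Proof. have := ltn_ord X. rewrite /blk. move: HN; lia. Qed.
Lemma blk_le (X Y : 'I_N.+1) : (X <= Y)%N -> blk X <= blk Y.
Proof. rewrite /blk. lia. Qed.

Variable cls : pred (nat * nat * nat).
Variable H : {set {set 'I_N.+1}}.
Hypothesis hcls : forall b1 b2 b3, cls (b1, b2, b3) ->
  [&& b1 <= b2 <= b3, b3 < 2 * m & ~~ ((b1 == b2) && (b2 == b3))].
Hypothesis hU : forall c1 c2 c3 b1 b2 b3, cls (c1, c2, c3) -> b1 <= b2 <= b3 -> b3 < 2 * m ->
  covers (owner m (c1, c2, c3)) (b1, b2, b3) -> cls (b1, b2, b3).
Hypothesis hH : forall X Y Z : 'I_N.+1, (X < Y < Z)%N ->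
  ([set X; Y; Z] \in H) = cls (blk X, blk Y, blk Z).
Hypothesis hH3 : forall e, e \in H -> exists X Y Z : 'I_N.+1, [/\ X != Y, Y != Z, X != Z & e = [set X; Y; Z]].

Lemma inL p : p \in Lcls cls -> exists c1 c2 c3, cls (c1, c2, c3) /\ p = owner m (c1, c2, c3).
Proof.
rewrite mem_undup => /mapP [[[c1 c2] c3]]. rewrite mem_filter => /andP [hc _] ->.
by exists c1, c2, c3.
Qed.

Lemma decomp_class : cycle_decomp H (csX cls).
Proof.
have HN' : 6 * m <= N.+1 by rewrite HN.
split.
  move=> t /flatten_mapP [p hp /mapP [c hc ->]].
  have [c1 [c2 [c3 [hcl Ep]]]] := inL hp. subst p.
  have /and3P [hs hc3 hne] := hcls hcl.
  have [V1 V2 V3 V4] := own_valid Hm hs hc3 hne.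
  split; first exact: (uniq_mk HN' V1 V2 V3 hc).
  apply/subsetP => e he.
  have [X [Y [Z [nXY nYZ nXZ -> cv]]]] := edge_piece HN' V1 V2 V3 hc he.
  have [s1 s2] := V4.
  have [X' [Y' [Z' [hs' -> cv']]]] := sort3 (F := fun X Y Z => covA (pblocks (owner m (c1, c2, c3))) (pal (owner m (c1, c2, c3))) (blk X, blk Y, blk Z)) (fun a b c => proj1 (covA_sym _ V4 _ _ _)) (fun a b c => proj2 (covA_sym _ V4 _ _ _)) nXY nYZ nXZ.
  rewrite hH //. apply: (hU hcl) => //.
  - by apply/andP; split; apply: blk_le; lia.
  - exact: blk_lt.
  - by rewrite /covers -cv'.
move=> e he.
have [X0 [Y0 [Z0 [nXY nYZ nXZ E]]]] := hH3 he.
have [X [Y [Z [hs E2 _]]]] := sort3 (F := fun _ _ _ => true) (fun _ _ _ => erefl) (fun _ _ _ => erefl) nXY nYZ nXZ.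
rewrite E E2 in he *. rewrite hH // in he.
set b := (blk X, blk Y, blk Z).
rewrite /csX count_flatten -map_comp.
rewrite (_ : map _ (Lcls cls) = map (fun p => nat_of_bool (covers p b)) (Lcls cls)); last first.
  apply/eq_in_map => p hp /=. have [c1 [c2 [c3 [hcl Ep]]]] := inL hp. subst p.
  have /and3P [hs' hc3 hne] := hcls hcl.
  have [V1 V2 V3 V4] := own_valid Hm hs' hc3 hne.
  rewrite /pcyc (count_piece HN' V1 V2 V3) //; apply/eqP => E9; move: hs; rewrite E9; lia.
rewrite (sumn_count (fun p => covers p b)). apply: (count1 (q := owner m b)).
- exact: undup_uniq.
- rewrite mem_undup. apply/mapP. exists b => //. rewrite mem_filter he /b memBT //.
    by apply/andP; split; apply: blk_le; lia.
  exact: blk_lt.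
- have /and3P [h1 h2 h3] := hcls he. exact: ownE.
- move=> p hp cv. have [c1 [c2 [c3 [hcl E3]]]] := inL hp.
  have /and3P [hs' hc3 hne] := hcls hcl.
  have /and3P [hb1 hb2 hb3] := hcls he.
  rewrite E3 in cv *. by have [-> _] := ownU Hm hs' hc3 hne hb1 hb2 cv.
Qed.
End Class.

Lemma set3U (T : finType) (X Y Z : T) : [set X; Y; Z] = X |: (Y |: [set Z]).
Proof. by apply/setP => w; rewrite !inE; case: (w == X); case: (w == Y); case: (w == Z). Qed.

Lemma card3E (T : finType) (X Y Z : T) : X != Y -> Y != Z -> X != Z -> #|[set X; Y; Z]| = 3.
Proof.
move=> nXY nYZ nXZ. rewrite set3U !cardsU1 cards1 !inE (negbTE nXY) (negbTE nXZ) (negbTE nYZ) //.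
Qed.

Lemma card3 (T : finType) (e : {set T}) : #|e| = 3 ->
  exists X Y Z, [/\ X != Y, Y != Z, X != Z & e = [set X; Y; Z]].
Proof.
move=> he. have /card_gt0P [x hx] : 0 < #|e| by rewrite he.
have : #|e :\ x| == 2 by move: he; rewrite (cardsD1 x) hx; case: #|e :\ x| => // [[|[|[]]]].
case/cards2P => y [z [nyz E]].
have hy : y \in e :\ x by rewrite E !inE eqxx.
have hz : z \in e :\ x by rewrite E !inE eqxx orbT.
move: hy hz; rewrite !inE => /andP [nyx _] /andP [nzx _].
exists x, y, z; split => //; first by rewrite eq_sym.
- by rewrite eq_sym.
- by rewrite -(setD1K hx) E set3U.
Qed.

Section Final.
Variable N m : nat.
Hypothesis HN : N.+1 = 6 * m.
Hypothesis Hm : 3 <= m.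

Definition bset (b : nat) : {set 'I_N.+1} := [set y : 'I_N.+1 | blk y == b].

Lemma bsetE b : b < 2 * m -> bset b = [set inord (3 * b); inord (3 * b + 1); inord (3 * b + 2)].
Proof.
move=> hb. apply/setP => y. rewrite !inE /blk.
have k0 : nat_of_ord (inord (3 * b) : 'I_N.+1) = 3 * b by rewrite inordK //; lia.
have k1 : nat_of_ord (inord (3 * b + 1) : 'I_N.+1) = 3 * b + 1 by rewrite inordK //; lia.
have k2 : nat_of_ord (inord (3 * b + 2) : 'I_N.+1) = 3 * b + 2 by rewrite inordK //; lia.
rewrite -!val_eqE /= k0 k1 k2. apply/idP/idP; lia.
Qed.

Lemma card_bset b : b < 2 * m -> #|bset b| = 3.
Proof.
move=> hb. rewrite bsetE // card3E // -val_eqE /= !inordK; lia.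
Qed.

Lemma blk_lt' (X : 'I_N.+1) : blk X < 2 * m.
Proof. have := ltn_ord X. rewrite /blk. move: HN; lia. Qed.

Section Side.
Variable P : pred nat.
Definition Vs : {set 'I_N.+1} := [set x | P (blk x)].
Definition Is := preim_partition (@blk N) Vs.

Lemma Is_card t : t \in Is -> #|t| = 3.
Proof.
case/imsetP => x hx ->.
have -> : [set y in Vs | blk x == blk y] = bset (blk x); last exact: card_bset (blk_lt' x).
apply/setP => y. rewrite !inE. apply/andP/idP => [[_ /eqP ->] //|/eqP E].
split; last by rewrite E. by move: hx; rewrite !inE E.
Qed.

Lemma one_factor_s : one_factor Vs Is.
Proof. split; [exact: preim_partitionP | exact: Is_card]. Qed.

Lemma memIs (X Y Z : 'I_N.+1) : X != Y -> Y != Z -> X != Z -> X \in Vs ->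
  ([set X; Y; Z] \in Is) = (blk X == blk Y) && (blk Y == blk Z).
Proof.
move=> nXY nYZ nXZ hX. apply/idP/idP.
  case/imsetP => x hx E.
  have : X \in [set X; Y; Z] by rewrite !inE eqxx.
  have : Y \in [set X; Y; Z] by rewrite !inE eqxx orbT.
  have : Z \in [set X; Y; Z] by rewrite !inE eqxx !orbT.
  rewrite E !inE => /andP [_ /eqP <-] /andP [_ /eqP <-] /andP [_ /eqP <-].
  by rewrite !eqxx.
case/andP => /eqP E1 /eqP E2. apply/imsetP. exists X => //.
apply/eqP. rewrite eqEcard. apply/andP; split.
  apply/subsetP => w. rewrite !inE => /orP [/orP [] | ] /eqP -> {w};
  rewrite -?E2 -?E1 eqxx andbT; by move: hX; rewrite inE.
rewrite card3E //. have <- := card_bset (blk_lt' X). apply: subset_leq_card.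
apply/subsetP => w. rewrite !inE. by case/andP => _ /eqP ->.
Qed.
End Side.
End Final.

Lemma covers_ne m0 c1 c2 c3 x : covers (owner m0 (c1, c2, c3)) (x, x, x) = false.
Proof.
rewrite /covers /covA.
have H0 : forall i, pal (owner m0 (c1, c2, c3)) i i i = false.
  move=> i. rewrite /owner. case: ifP => _; [|case: ifP => _]; rewrite /pal /= ?/alK ?/alC ?/alT ?eqxx //.
  apply/negbTE. lia.
by rewrite H0 !andbF.
Qed.

Lemma blk_mono N (X Y : 'I_N.+1) : (X <= Y)%N -> blk X <= blk Y.
Proof. rewrite /blk. lia. Qed.

Section Final2.
Variable N m : nat.
Hypothesis HN : N.+1 = 6 * m.
Hypothesis Hm : 3 <= m.

Lemma in_complete3 (V : {set 'I_N.+1}) (X Y Z : 'I_N.+1) : X != Y -> Y != Z -> X != Z ->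
  ([set X; Y; Z] \in complete3 V) = [&& X \in V, Y \in V & Z \in V].
Proof.
move=> nXY nYZ nXZ. rewrite /complete3 inE card3E // eqxx andbT set3U !subUset !sub1set.
by rewrite andbA.
Qed.

Definition cls1 : pred (nat * nat * nat) := fun b => let '(b1, b2, b3) := b in
  [&& b1 <= b2 <= b3, b3 < m & ~~ ((b1 == b2) && (b2 == b3))].
Definition cls2 : pred (nat * nat * nat) := fun b => let '(b1, b2, b3) := b in
  [&& b1 <= b2 <= b3, m <= b1, b3 < 2 * m & ~~ ((b1 == b2) && (b2 == b3))].
Definition cls12 : pred (nat * nat * nat) := fun b => let '(b1, b2, b3) := b in
  [&& b1 <= b2 <= b3, b1 < m, m <= b3 & b3 < 2 * m].

Definition V1 := Vs N (fun b => b < m).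
Definition V2 := Vs N (fun b => m <= b).
Definition I1 := Is N (fun b => b < m).
Definition I2 := Is N (fun b => m <= b).

Lemma dec1 : cycle_decomp (complete3 V1 :\: I1) (csX N m cls1).
Proof.
apply: (decomp_class HN Hm).
- move=> b1 b2 b3 /and3P [h1 h2 h3]. rewrite h1 h3 /=. lia.
- move=> c1 c2 c3 b1 b2 b3 /and3P [h1 h2 h3] hb hb3 cv.
  have [_ [k1 _ _]] := ownU Hm h1 ltac:(lia) h3 hb hb3 cv.
  rewrite /cls1 hb k1 //=. apply/negP => /andP [/eqP E1 /eqP E2].
  by move: cv; rewrite E1 E2 covers_ne.
- move=> X Y Z hs.
  have nXY : X != Y by apply/eqP => E; move: hs; rewrite E; lia.
  have nYZ : Y != Z by apply/eqP => E; move: hs; rewrite E; lia.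
  have nXZ : X != Z by apply/eqP => E; move: hs; rewrite E; lia.
  have l1 := blk_mono (X:=X) (Y:=Y) ltac:(lia). have l2 := blk_mono (X:=Y) (Y:=Z) ltac:(lia).
  rewrite in_setD in_complete3 // /V1 !inE /cls1 l1 l2 /=.
  case: (boolP (blk Z < m)) => hZ; last by rewrite !andbF.
  have hX : blk X < m by move: l1 l2 hZ; clear; lia.
  have hY : blk Y < m by move: l1 l2 hZ; clear; lia.
  by rewrite (memIs HN Hm) // ?inE // hX hY /= ?andbT.
- move=> e. rewrite in_setD => /andP [_]. rewrite /complete3 inE => /andP [_ /eqP].
  exact: card3.
Qed.

Lemma dec2 : cycle_decomp (complete3 V2 :\: I2) (csX N m cls2).
Proof.
apply: (decomp_class HN Hm).
- move=> b1 b2 b3 /and4P [h1 h2 h3 h4]. by rewrite h1 h3 h4.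
- move=> c1 c2 c3 b1 b2 b3 /and4P [h1 h2 h3 h4] hb hb3 cv.
  have [_ [_ k2 _]] := ownU Hm h1 h3 h4 hb hb3 cv.
  rewrite /cls2 hb k2 // hb3 /=. apply/negP => /andP [/eqP E1 /eqP E2].
  by move: cv; rewrite E1 E2 covers_ne.
- move=> X Y Z hs.
  have nXY : X != Y by apply/eqP => E; move: hs; rewrite E; lia.
  have nYZ : Y != Z by apply/eqP => E; move: hs; rewrite E; lia.
  have nXZ : X != Z by apply/eqP => E; move: hs; rewrite E; lia.
  have l1 := blk_mono (X:=X) (Y:=Y) ltac:(lia). have l2 := blk_mono (X:=Y) (Y:=Z) ltac:(lia).
  have lZ := blk_lt' HN Hm Z.
  rewrite in_setD in_complete3 // /V2 !inE /cls2 l1 l2 lZ /=.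
  case: (boolP (m <= blk X)) => hX; last by rewrite !andbF.
  have hY : m <= blk Y by move: l1 l2 hX; clear; lia.
  have hZ : m <= blk Z by move: l1 l2 hX; clear; lia.
  by rewrite (memIs HN Hm) // ?inE // hY hZ /= ?andbT.
- move=> e. rewrite in_setD => /andP [_]. rewrite /complete3 inE => /andP [_ /eqP].
  exact: card3.
Qed.

Lemma in_cross3 (X Y Z : 'I_N.+1) : (X < Y < Z)%N ->
  ([set X; Y; Z] \in cross3 V1 V2) = (blk X < m) && (m <= blk Z).
Proof.
move=> hs.
have nXY : X != Y by apply/eqP => E; move: hs; rewrite E; lia.
have nYZ : Y != Z by apply/eqP => E; move: hs; rewrite E; lia.
have nXZ : X != Z by apply/eqP => E; move: hs; rewrite E; lia.
have l1 := blk_mono (X:=X) (Y:=Y) ltac:(lia). have l2 := blk_mono (X:=Y) (Y:=Z) ltac:(lia).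
rewrite /cross3 inE card3E // eqxx /=. congr (_ && _).
  apply/set0Pn/idP => [[w]|h]; last by exists X; rewrite !inE eqxx h.
  rewrite !inE => /andP [/orP [/orP []|] /eqP -> h]; move: h l1 l2; clear; lia.
apply/set0Pn/idP => [[w]|h]; last by exists Z; rewrite !inE eqxx h !orbT.
rewrite !inE => /andP [/orP [/orP []|] /eqP -> h]; move: h l1 l2; clear; lia.
Qed.

Lemma dec12 : cycle_decomp (cross3 V1 V2) (csX N m cls12).
Proof.
apply: (decomp_class HN Hm).
- move=> b1 b2 b3 /and4P [h1 h2 h3 h4]. rewrite h1 h4 /=. apply/negP => /andP [/eqP E1 /eqP E2]. lia.
- move=> c1 c2 c3 b1 b2 b3 /and4P [h1 h2 h3 h4] hb hb3 cv.
  have hne : ~~ ((c1 == c2) && (c2 == c3)) by apply/negP => /andP [/eqP E1 /eqP E2]; lia.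
  have [_ [_ _ k3]] := ownU Hm h1 h4 hne hb hb3 cv.
  rewrite /cls12 hb hb3 /= andbT. apply/andP. lia.
- move=> X Y Z hs. rewrite in_cross3 // /cls12.
  have l1 := blk_mono (X:=X) (Y:=Y) ltac:(lia). have l2 := blk_mono (X:=Y) (Y:=Z) ltac:(lia).
  by rewrite l1 l2 (blk_lt' HN Hm Z) /= andbT.
- move=> e. rewrite /cross3 inE => /and3P [/eqP h _ _]. exact: card3.
Qed.

Lemma card_V1 : #|V1| = 3 * m.
Proof.
have hk : 3 * m <= N.+1 by rewrite HN; lia.
have -> : V1 = [set widen_ord hk i | i : 'I_(3 * m)].
  apply/setP => x. rewrite !inE /blk. apply/idP/imsetP => [h|[i _ ->]] /=.
    have hx : x < 3 * m by lia.
    exists (Ordinal hx) => //. exact: val_inj.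
  have := ltn_ord i. lia.
rewrite card_imset ?cardsT ?card_ord //. by move=> i j /(congr1 (@nat_of_ord _)) /= E; apply: val_inj.
Qed.

Lemma V2C : V2 = ~: V1.
Proof. apply/setP => x. rewrite !inE. by rewrite -leqNgt. Qed.

Lemma main_split : two_split_decomp N.+1 9.
Proof.
exists V1, V2, I1, I2, (csX N m cls1), (csX N m cls2), (csX N m cls12).
split.
- split.
  + by rewrite V2C setICr.
  + by rewrite V2C setUCr.
  + rewrite card_V1 HN; lia.
  + have := cardsC V1. rewrite V2C card_V1 cardT size_enum_ord => E.
    move: E HN. lia.
- exact: (one_factor_s HN Hm).
- exact: (one_factor_s HN Hm).
- split; [exact: dec1 | exact: dec2 | exact: dec12].
Qed.
End Final2.


Theorem theorem14 (v : nat) : 6 %| v -> 18 <= v -> two_split_decomp v 9.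
Proof.
case/dvdnP => m -> h18.
have Hm : 3 <= m by lia.
have -> : m * 6 = (6 * m).-1.+1 by lia.
apply: (@main_split ((6 * m).-1) m) => //. lia.
Qed.
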